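(* Let $v\in C^1([0,T];C^1(\mathcal K^* ))$ and $B\in C([0,T];C^0(\mathcal K^* ))$ satisfy $\frac{dv}{dt}+I_v(\tilde D_1v)+\tilde D_0B=0$. Let $\gamma\in C^1([0,T];C_1)$ be a dual 1-chain that is materially advected, $\frac{d\gamma}{dt}=\mathcal L^{\rm chain}_{v(t)}\gamma$, and that is a cycle at time $0$, $\partial\gamma(0)=0$. Then the discrete circulation $\Gamma(t)=v(t)(\gamma(t))=\sum_j\gamma_j(t)v_j(t)$ is constant: $\frac{d\Gamma}{dt}=0$.
   Context: $C^k(\mathcal K^* )$ is the space of real dual $k$-cochains on a cell complex and $C_k$ the space of real dual $k$-chains (same dimension), with pairing $\alpha(\gamma)=\sum_j\alpha_j\gamma_j$. $\tilde D_0:C^0\to C^1$, $\tilde D_1:C^1\to C^2$ are dual coboundary (incidence) matrices with $\tilde D_1\tilde D_0=0$; the boundary $\partial:C_1\to C_0$ is $\partial=\tilde D_0^T$, so $(\tilde D_0\phi)(\gamma)=\phi(\partial\gamma)$. For each velocity $v$ there are linear maps $I_v:C^2\to C^1$ (the discrete contraction, the same one appearing in the momentum equation) and $I_v^{(1)}:C^1\to C^0$. The discrete Lie derivative is defined by Cartan's formula: on 1-cochains $\mathcal L_v\alpha=\tilde D_0(I_v^{(1)}\alpha)+I_v(\tilde D_1\alpha)$, on 0-cochains $\mathcal L_v\phi=I_v^{(1)}(\tilde D_0\phi)$. The chain Lie derivative $\mathcal L_v^{\rm chain}$ on $C_1$ and on $C_0$ is the adjoint of $\mathcal L_v$ with respect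 to the pairing: $\alpha(\mathcal L_v^{\rm chain}\gamma)=(\mathcal L_v\alpha)(\gamma)$ for all cochains $\alpha$ of the corresponding degree. *)

(* Defs.v *)
From HB Require Import structures.
From mathcomp Require Import all_boot all_order all_algebra.
From mathcomp Require Import all_classical all_reals all_analysis.
Set Implicit Arguments. Unset Strict Implicit. Unset Printing Implicit Defensive.
Import Order.TTheory GRing.Theory Num.Theory.
Import numFieldNormedType.Exports.
Local Open Scope classical_set_scope.
Local Open Scope ring_scope.

(* Dual k-cochains / dual k-chains on a complex with n_k dual k-cells are
   column vectors 'cV[R]_(n_k). *)

Definition pairing (R : pzRingType) (n : nat) (a g : 'cV[R]_n) : R :=
  \sum_(j < n) a j 0 * g j 0.

Definition tint (R : realType) (T : R) : set R := [set t | 0 <= t <= T].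

(* f has derivative l at t relative to the set A (one-sided at endpoints
   of an interval): difference quotients with t+h in A, h <> 0, tend to l. *)
Definition deriv_within (R : realType) (A : set R) (f : R -> R) (t l : R) : Prop :=
  (fun h : R => h^-1 * (f (t + h) - f t))
    @ within (fun h : R => A (t + h)) (dnbhs (0 : R)) --> l.

Definition C1_with_deriv (R : realType) (T : R) (f f' : R -> R) : Prop :=
  (forall t, tint T t -> deriv_within (tint T) f t (f' t)) /\
  {within tint T, continuous f'}.

Definition C1_vec_with_deriv (R : realType) (n : nat) (T : R)
  (f f' : R -> 'cV[R]_n) : Prop :=
  forall j : 'I_n, C1_with_deriv T (fun t => f t j 0) (fun t => f' t j 0).

Definition C0_vec (R : realType) (n : nat) (T : R) (f : R -> 'cV[R]_n) : Prop :=
  forall j : 'I_n, {within tint T, continuous (fun t => f t j 0)}.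

(* Discrete Lie derivative on 1-cochains via Cartan's formula:
   L_v alpha = D0 (I1_v alpha) + I_v (D1 alpha); as a matrix acting on C^1. *)
Definition lie1 (R : pzRingType) (n0 n1 n2 : nat)
  (D0 : 'M[R]_(n1, n0)) (D1 : 'M[R]_(n2, n1))
  (Iv : 'M[R]_(n1, n2)) (I1v : 'M[R]_(n0, n1)) : 'M[R]_n1 :=
  D0 *m I1v + Iv *m D1.

(* Chain Lie derivative on C_1: adjoint of lie1 w.r.t. the pairing, i.e.
   the transpose matrix (pairing is the standard dot product). *)
Definition lie1_chain (R : pzRingType) (n0 n1 n2 : nat)
  (D0 : 'M[R]_(n1, n0)) (D1 : 'M[R]_(n2, n1))
  (Iv : 'M[R]_(n1, n2)) (I1v : 'M[R]_(n0, n1)) : 'M[R]_n1 :=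
  (lie1 D0 D1 Iv I1v)^T.

Definition bdry (R : pzRingType) (n0 n1 : nat) (D0 : 'M[R]_(n1, n0))
  (g : 'cV[R]_n1) : 'cV[R]_n0 := D0^T *m g.

(* Main.v *)
Set Warnings "-notation-overridden,-ambiguous-paths,-notation-incompatible-prefix,-deprecated".
Require Import Defs.
From HB Require Import structures.
From mathcomp Require Import all_boot all_order all_algebra.
From mathcomp Require Import all_classical all_reals all_analysis.
Import Order.TTheory GRing.Theory Num.Theory.
Import numFieldNormedType.Exports.
Local Open Scope classical_set_scope.
Local Open Scope ring_scope.
Set Implicit Arguments. Unset Strict Implicit.
From mathcomp Require Import ring lra.
Section S.
Variable R : realType.

Lemma within_dnbhsP (P Q : R -> Prop) :
  (\forall h \near within P (dnbhs (0:R)), Q h) <->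
  exists2 d : R, 0 < d & forall h, h != 0 -> `|h| < d -> P h -> Q h.
Proof.
rewrite /within /dnbhs /within /=; split.
  move=> /nbhs_normP [d d0 H]; exists d => // h h0 hd Ph.
  apply: (H h) => //=. by rewrite sub0r normrN.
move=> [d d0 H]; apply/nbhs_normP; exists d => // h /= hd h0 Ph.
apply: H => //. by rewrite sub0r normrN in hd.
Qed.

Variable A : set R.
Local Notation Fw t := (within (fun h : R => A (t + h)) (dnbhs (0:R))).

Lemma Fw_neq0 t : \forall h \near Fw t, h != 0.
Proof. by apply/within_dnbhsP; exists 1. Qed.

Lemma Fw_id t : (fun h : R => h) @ Fw t --> (0:R).
Proof. apply: cvg_within_filter; apply: cvg_within_filter; exact: cvg_id. Qed.

Lemma dw_shift f t l : deriv_within A f t l -> (fun h => f (t + h)) @ Fw t --> f t.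
Proof.
move=> H.
have Hc : (fun h => f t + h * (h^-1 * (f (t+h) - f t))) @ Fw t --> f t + 0 * l.
  apply: cvgD; first exact: cvg_cst.
  by apply: cvgM; [exact: Fw_id | exact: H].
rewrite mul0r addr0 in Hc; apply: cvg_trans Hc; apply: near_eq_cvg.
near=> h. have h0 : h != 0 by near: h; exact: Fw_neq0.
by rewrite mulrA mulfV // mul1r addrC subrK.
Unshelve. all: by end_near. Qed.

Lemma dw_mul f g t lf lg : deriv_within A f t lf -> deriv_within A g t lg ->
  deriv_within A (fun s => f s * g s) t (f t * lg + lf * g t).
Proof.
move=> Hf Hg; rewrite /deriv_within.
have Hc : (fun h => f (t+h) * (h^-1 * (g (t+h) - g t)) + h^-1 * (f (t+h) - f t) * g t)
   @ Fw t --> f t * lg + lf * g t.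
  apply: cvgD; first by apply: cvgM; [exact: dw_shift Hf| exact: Hg].
  by apply: cvgM; [exact: Hf | exact: cvg_cst].
apply: cvg_trans Hc; apply: near_eq_cvg; apply: nearW => h /=; ring.
Qed.

Lemma dw_cst c t : deriv_within A (fun _ => c) t 0.
Proof.
rewrite /deriv_within; apply: cvg_trans (@cvg_cst R (0:R) R (Fw t) _); apply: near_eq_cvg;
  apply: nearW => h /=; ring.
Qed.

Lemma dw_sum n (F : 'I_n -> R -> R) dF t :
  (forall j, deriv_within A (F j) t (dF j)) ->
  deriv_within A (fun s => \sum_j F j s) t (\sum_j dF j).
Proof.
move=> H; rewrite /deriv_within.
have := @cvg_big R 'I_n +%R 0 xpredT add_continuous _ (Fw t) (index_enum 'I_n)
  (fun j h => h^-1 * (F j (t + h) - F j t)) dF.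
move=> /(_ _ (fun j _ => H j)) Hc; apply: cvg_trans Hc; apply: near_eq_cvg; apply: nearW => h /=.
by rewrite -sumrB mulr_sumr.
Qed.

Lemma dw_ext f g t l : (forall s, f s = g s) -> deriv_within A f t l -> deriv_within A g t l.
Proof. by move=> e; have -> : g = f by apply/funext=> s; rewrite e. Qed.

Lemma dw_lim f t l l' : l = l' -> deriv_within A f t l -> deriv_within A f t l'.
Proof. by move=> ->. Qed.

Lemma within_nbhsP t (Q : R -> Prop) :
  (exists2 d : R, 0 < d & forall s, `|t - s| < d -> A s -> Q s) ->
  (\forall s \near within A (nbhs t), Q s).
Proof.
move=> [d d0 H]; rewrite /within /=; apply/nbhs_normP; exists d => //.
Qed.

Lemma dw_within_cont f t l : deriv_within A f t l -> f @ within A (nbhs t) --> f t.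
Proof.
move=> /dw_shift Hs; apply/cvgrPdist_lt => e e0.
move/cvgrPdist_lt: Hs => /(_ e e0) /within_dnbhsP [d d0 Hd].
apply: within_nbhsP; exists d => // s hs As.
have [->|st] := eqVneq s t; first by rewrite subrr normr0.
have := Hd (s - t); rewrite [t + (s - t)]addrC subrK; apply => //.
  by rewrite subr_eq0.
by rewrite distrC.
Qed.

Lemma dw_is_derive f t l : (\forall h \near (0:R), A (t + h)) ->
  deriv_within A f t l -> is_derive t 1 f l.
Proof.
move=> HA H.
have H2 : (fun h => h^-1 * (f (t+h) - f t)) @ 0^' --> l.
  apply: cvg_trans H => S /=; rewrite {1}/within; move: S.
  move=> S HS; move: HS; rewrite !nbhs_simpl /= => HS.
  have [d d0 Hd] := (within_dnbhsP _ _).1 HS.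
  move/nbhs_normP: HA => [d' d'0 Hd'].
  rewrite /dnbhs /within /=; apply/nbhs_normP; exists (Num.min d d').
    by rewrite /= lt_min d0.
  move=> h /=; rewrite lt_min => /andP[h1 h2] h0; apply: Hd => //.
    by rewrite sub0r normrN in h1.
  exact: Hd'.
have Hc : (fun h : R => h^-1 *: ((f \o shift t) (h *: 1) - f t)) @ 0^' --> l.
  suff -> : (fun h : R => h^-1 *: ((f \o shift t) (h *: 1) - f t)) =
     (fun h => h^-1 * (f (t+h) - f t)) by [].
  by apply/funext => h /=; rewrite -[h%:A]/(h * 1) mulr1 [h + t]addrC.
apply: DeriveDef; first exact: (cvgP _ Hc).
exact: cvg_lim Hc.
Qed.

Lemma is_derive_dw (f : R -> R) (t l : R) : is_derive t (1:R) f l -> deriv_within A f t l.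
Proof.
move=> Hd.
have H1 : (fun h : R => h^-1 *: ((f \o shift t) (h *: 1) - f t)) @ 0^' --> 'D_1 f t.
  by case: Hd => d _; exact: d.
rewrite derive_val in H1.
rewrite /deriv_within; apply: cvg_within_filter.
suff <- : (fun h : R => h^-1 *: ((f \o shift t) (h *: 1) - f t)) =
     (fun h => h^-1 * (f (t+h) - f t)) by [].
by apply/funext => h /=; rewrite -[h%:A]/(h * 1) mulr1 [h + t]addrC.
Qed.

Lemma is_derive_expN (c t : R) : is_derive t (1:R) (fun s : R => expR (- c * s)) (expR (- c * t) * (- c)).
Proof.
have H1 : is_derive t (1:R) (fun s : R => - c * s) (- c).
  have := @is_deriveZ R R R id (- c) t 1 1 (is_derive_id t 1).
  by rewrite [_ *: 1]mulr1.
exact: (@is_derive1_comp R expR (fun s => - c * s) t _ _ (is_derive_expR _) H1).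
Qed.

End S.

Section G.
Variable R : realType.

Lemma tintE (T : R) : tint T = [set` `[0, T]].
Proof. by apply/funext => s; rewrite /tint /= in_itv. Qed.

Lemma tint_cont (T : R) (g dg : R -> R) :
  (forall s, tint T s -> deriv_within (tint T) g s (dg s)) ->
  {within `[0, T], continuous g}.
Proof.
move=> H; apply/subspace_continuousP => x Ax.
rewrite -tintE in Ax *; exact: dw_within_cont (H x Ax).
Qed.

Lemma tint_interior (T x : R) : 0 < x < T -> \forall h \near (0:R), tint T (x + h).
Proof.
move=> /andP[x0 xT]; apply/nbhs_normP; exists (Num.min x (T - x)).
  by rewrite /= lt_min x0 subr_gt0.
move=> h /=; rewrite sub0r normrN lt_min => /andP[h1 h2].
have := ler_norm h; have := ler_normr h 0; rewrite /tint /=.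
move: h1 h2; rewrite !ltr_norml => /andP[a b] /andP[c d] _ _.
apply/andP; split; lra.
Qed.

Lemma gronwall (T c : R) (f df : R -> R) :
  (forall s, tint T s -> 0 <= f s) -> f 0 = 0 ->
  (forall s, tint T s -> deriv_within (tint T) f s (df s)) ->
  (forall s, tint T s -> df s <= c * f s) ->
  forall t, tint T t -> f t = 0.
Proof.
move=> f0 f00 Hd Hle t tt.
pose g := fun s => expR (- c * s) * f s.
pose dg := fun s => expR (- c * s) * df s + expR (- c * s) * (- c) * f s.
have Hg s : tint T s -> deriv_within (tint T) g s (dg s).
  by move=> Ts; exact: (dw_mul (is_derive_dw (tint T) (is_derive_expN c s)) (Hd s Ts)).
have Hg' s : tint T s -> dg s <= 0.
  move=> Ts; have -> : dg s = expR (- c * s) * (df s - c * f s) by rewrite /dg; ring.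
  apply: mulr_ge0_le0; first exact: expR_ge0.
  by rewrite subr_le0; exact: Hle.
have /andP[t0 tT] := tt.
have gle : g t <= g 0.
  apply: (@ler0_derive1_nincr R g 0 T) => //.
  - move=> x; rewrite in_itv /= => xi.
    have xT : tint T x by move: xi => /andP[a b]; rewrite /tint /=; apply/andP; split; lra.
    by case: (dw_is_derive (tint_interior xi) (Hg x xT)).
  - move=> x; rewrite in_itv /= => xi.
    have xT : tint T x by move: xi => /andP[a b]; rewrite /tint /=; apply/andP; split; lra.
    rewrite derive1E; case: (dw_is_derive (tint_interior xi) (Hg x xT)) => _ ->.
    exact: Hg'.
  - exact: tint_cont Hg.
have g00 : g 0 = 0 by rewrite /g f00 mulr0.
have gt0 : 0 <= g t by apply: mulr_ge0; [exact: expR_ge0 | exact: f0].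
have : g t = 0 by apply/eqP; rewrite eq_le gt0 andbT -g00.
rewrite /g => /eqP; rewrite mulf_eq0 => /orP[|/eqP //].
by rewrite gt_eqF // expR_gt0.
Qed.
End G.

Section H.
Variable R : realType.

Lemma le_sum1 n (F : 'I_n -> R) i : (forall j, 0 <= F j) -> F i <= \sum_j F j.
Proof. move=> H; rewrite (bigD1 i) //= lerDl sumr_ge0 // => j _; exact: H. Qed.

Lemma bound_cont (T : R) (f : R -> R) : 0 <= T -> {within `[0, T], continuous f} ->
  exists V, 0 <= V /\ forall s, tint T s -> `|f s| <= V.
Proof.
move=> T0 cf.
have [a ain Ha] := EVT_max T0 cf.
have [b bin Hb] := EVT_min T0 cf.
exists (`|f a| + `|f b|); split; first by rewrite addr_ge0.
move=> s Ts; have sin : s \in `[0, T] by rewrite in_itv.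
have h1 := Ha s sin; have h2 := Hb s sin.
have n1 := ler_norm (f a); have n2 : - f b <= `|f b| by rewrite -normrN ler_norm.
have n3 := normr_ge0 (f a); have n4 := normr_ge0 (f b).
rewrite ler_norml; apply/andP; split; lra.
Qed.

Lemma lin_decomp n p q (J : 'cV[R]_n -> 'M[R]_(p, q)) :
  (forall (a : R) u w, J (a *: u + w) = a *: J u + J w) ->
  forall u, J u = \sum_(m < n) u m 0 *: J (delta_mx m 0).
Proof.
move=> HJ.
have J0 : J 0 = 0.
  have E := HJ 1 0 0; rewrite scaler0 addr0 scale1r in E.
  by apply: (addrI (J 0)); rewrite addr0 -E.
have Jadd : {morph J : x y / x + y >-> x + y}.
  by move=> x y; have := HJ 1 x y; rewrite !scale1r.
have JZ a u : J (a *: u) = a *: J u by have := HJ a u 0; rewrite !addr0 J0 addr0.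
move=> u; rewrite {1}(matrix_sum_delta u).
under eq_bigr do rewrite big_ord1.
rewrite (big_morph J Jadd J0); apply: eq_bigr => m _; exact: JZ.
Qed.

Lemma quad_bound (K M x y : R) : `|M| <= K -> x * (M * y) + (M * y) * x <= K * (x * x + y * y).
Proof.
move=> /[dup] HK; rewrite ler_norml => /andP[h1 h2].
have e1 : 0 <= (K - M) * ((x + y) * (x + y)) by apply: mulr_ge0; [lra| rewrite -expr2 sqr_ge0].
have e2 : 0 <= (K + M) * ((x - y) * (x - y)) by apply: mulr_ge0; [lra| rewrite -expr2 sqr_ge0].
nra.
Qed.

End H.

Section P.
Variable R : realType.

Lemma pairingD n (a b g : 'cV[R]_n) : pairing (a + b) g = pairing a g + pairing b g.
Proof. by rewrite /pairing -big_split; apply: eq_bigr => j _; rewrite mxE mulrDl. Qed.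

Lemma pairing_tr n m (M : 'M[R]_(m, n)) (a : 'cV[R]_n) (g : 'cV[R]_m) :
  pairing a (M^T *m g) = pairing (M *m a) g.
Proof.
rewrite /pairing.
under eq_bigr do rewrite mxE mulr_sumr.
under [RHS]eq_bigr do rewrite mxE mulr_suml.
rewrite exchange_big /=; apply: eq_bigr => i _; apply: eq_bigr => j _.
by rewrite mxE; ring.
Qed.

Lemma pairing0 n (a : 'cV[R]_n) : pairing a 0 = 0.
Proof. by rewrite /pairing big1 // => j _; rewrite mxE mulr0. Qed.

Lemma dw_scal (A : set R) f t l c : deriv_within A f t l ->
  deriv_within A (fun s => c * f s) t (c * l).
Proof.
move=> H; apply: dw_lim (dw_mul (dw_cst A c t) H); ring.
Qed.
End P.

Lemma sum_const_ord (R : realType) n (x : R) : \sum_(i < n) x = x *+ n.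
Proof.
elim: n => [|n IH]; first by rewrite big_ord0.
by rewrite big_ord_recr /= IH mulrS addrC.
Qed.

Unset Implicit Arguments.
Set Strict Implicit.

Theorem theorem3p5 (R : realType) (n0 n1 n2 : nat)
  (D0 : 'M[R]_(n1, n0)) (D1 : 'M[R]_(n2, n1))
  (I : 'cV[R]_n1 -> 'M[R]_(n1, n2))
  (I1 : 'cV[R]_n1 -> 'M[R]_(n0, n1))
  (T : R)
  (v dv : R -> 'cV[R]_n1) (B : R -> 'cV[R]_n0) (gam dgam : R -> 'cV[R]_n1) :
  D1 *m D0 = 0 ->
  (forall (a : R) (u w : 'cV[R]_n1), I1 (a *: u + w) = a *: I1 u + I1 w) ->
  C1_vec_with_deriv T v dv ->
  C0_vec T B ->
  (forall t, tint T t -> dv t + I (v t) *m (D1 *m v t) + D0 *m B t = 0) ->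
  C1_vec_with_deriv T gam dgam ->
  (forall t, tint T t -> dgam t = lie1_chain D0 D1 (I (v t)) (I1 (v t)) *m gam t) ->
  bdry D0 (gam 0) = 0 ->
  forall t, tint T t ->
    deriv_within (tint T) (fun s => pairing (v s) (gam s)) t 0.
Proof.
move=> HD HI1 Hv HB Heq Hg Hdg H0 t tt.
have T0 : 0 <= T by case/andP: tt => a b; exact: le_trans a b.
pose x (i : 'I_n0) (s : R) : R := (D0^T *m gam s) i 0.
pose dx (i : 'I_n0) (s : R) : R := (D0^T *m dgam s) i 0.
have Hx i s : tint T s -> deriv_within (tint T) (x i) s (dx i s).
  move=> Ts.
  apply: (@dw_ext _ _ (fun s => \sum_j D0^T i j * gam s j 0)).
    by move=> r; rewrite /x mxE.
  apply: (dw_lim _ (dw_sum (fun j => @dw_scal _ _ _ _ _ (D0^T i j) ((Hg j).1 s Ts)))).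
  by rewrite /dx mxE.
have Mdef s : tint T s -> D0^T *m dgam s = (I1 (v s) *m D0)^T *m (D0^T *m gam s).
  move=> Ts; rewrite Hdg // /lie1_chain /lie1 [LHS]mulmxA -trmx_mul mulmxDl -!mulmxA HD.
  by rewrite mulmx0 addr0 [in LHS]trmx_mul -mulmxA.
have [V [V0 HV]] : exists V, 0 <= V /\ forall m s, tint T s -> `|v s m 0| <= V.
  have : forall m : 'I_n1, exists V, 0 <= V /\ forall s, tint T s -> `|v s m 0| <= V.
    move=> m; apply: bound_cont T0 _; exact: tint_cont ((Hv m).1).
  move=> /fin_all_exists [Vf HVf]; exists (\sum_m Vf m); split.
    by apply: sumr_ge0 => m _; case: (HVf m).
  move=> m s Ts; apply: le_trans ((HVf m).2 s Ts) _; apply: le_sum1 => j.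
  by case: (HVf j).
pose c m k j := I1 (delta_mx m 0) k j.
pose G (i k : 'I_n0) := \sum_j \sum_m V * `|c m k j| * `|D0 j i|.
have G0 i k : 0 <= G i k.
  by apply: sumr_ge0 => j _; apply: sumr_ge0 => m _; rewrite !mulr_ge0.
pose K := \sum_i \sum_k G i k.
have K0 : 0 <= K by apply: sumr_ge0 => i _; apply: sumr_ge0 => k _.
have HM i k s : tint T s -> `|((I1 (v s) *m D0)^T) i k| <= K.
  move=> Ts; apply: (@le_trans _ _ (G i k)); last first.
    have h1 := @le_sum1 _ _ (G i) k (G0 i).
    have h2 : \sum_k G i k <= K.
      apply: (@le_sum1 _ _ (fun i => \sum_k G i k)) => i'.
      by apply: sumr_ge0 => k' _.
    exact: le_trans h1 h2.
  rewrite !mxE /G; apply: le_trans (ler_norm_sum _ _ _) _; apply: ler_sum => j _.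
  rewrite (lin_decomp HI1 (v s)) summxE mulr_suml.
  apply: le_trans (ler_norm_sum _ _ _) _; apply: ler_sum => m _.
  rewrite mxE !normrM; apply: ler_wpM2r; first exact: normr_ge0.
  by apply: ler_wpM2r; [exact: normr_ge0 | exact: HV].
pose f s := \sum_i x i s * x i s.
pose df s := \sum_i (x i s * dx i s + dx i s * x i s).
have Hf s : tint T s -> deriv_within (tint T) f s (df s).
  move=> Ts; exact: (dw_sum (fun i => dw_mul (Hx i s Ts) (Hx i s Ts))).
have dxE i s : tint T s -> dx i s = \sum_k ((I1 (v s) *m D0)^T) i k * x k s.
  by move=> Ts; rewrite /dx Mdef // mxE.
have Hdf s : tint T s -> df s <= (K * n0%:R * 2) * f s.
  move=> Ts; rewrite /df.
  apply: (@le_trans _ _ (\sum_i \sum_k K * (x i s * x i s + x k s * x k s))).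
    apply: ler_sum => i _; rewrite dxE // mulr_sumr mulr_suml -big_split /=.
    by apply: ler_sum => k _; apply: quad_bound; exact: HM.
  rewrite le_eqVlt; apply/orP; left; apply/eqP.
  have -> : \sum_i \sum_k K * (x i s * x i s + x k s * x k s) =
     \sum_i \sum_(k < n0) (K * (x i s * x i s)) + \sum_(i < n0) \sum_k (K * (x k s * x k s)).
    rewrite -big_split; apply: eq_bigr => i _; rewrite -big_split; apply: eq_bigr => k _.
    by rewrite mulrDr.
  rewrite (eq_bigr (fun i => (K * (x i s * x i s)) *+ n0)); last first.
    by move=> i _; rewrite sum_const_ord.
  rewrite sum_const_ord sumrMnl /f -mulr_sumr.
  move: (\sum_i x i s * x i s) => a.
  rewrite -[(K * a) *+ n0]mulr_natr; ring.
have Hfpos s : tint T s -> 0 <= f s.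
  by move=> _; apply: sumr_ge0 => i _; rewrite -expr2 sqr_ge0.
have Hf00 : f 0 = 0.
  have H0' : D0^T *m gam 0 = 0 := H0.
  by rewrite /f /x H0' big1 // => i _; rewrite mxE mul0r.
have fz := gronwall Hfpos Hf00 Hf Hdf.
have Ht : D0^T *m gam t = 0.
  apply/matrixP => i j; rewrite (ord1 j) [RHS]mxE.
  have xx i' : 0 <= x i' t * x i' t by rewrite -expr2 sqr_ge0.
  have := @psumr_eq0P _ _ _ _ (fun i' _ => xx i') (fz t tt) i isT.
  by move/eqP; rewrite mulf_eq0 orbb => /eqP.
have HG := dw_sum (fun j => dw_mul ((Hv j).1 t tt) ((Hg j).1 t tt)).
rewrite /pairing; apply: (dw_lim _ HG).
have -> : \sum_j (v t j 0 * dgam t j 0 + dv t j 0 * gam t j 0) =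
   pairing (v t) (dgam t) + pairing (dv t) (gam t) by rewrite /pairing big_split.
rewrite Hdg // /lie1_chain pairing_tr -pairingD.
have E := Heq t tt; rewrite -addrA in E.
have dvE : dv t = - (I (v t) *m (D1 *m v t) + D0 *m B t) by rewrite -(addr0_eq E) opprK.
have -> : lie1 D0 D1 (I (v t)) (I1 (v t)) *m v t + dv t = D0 *m (I1 (v t) *m v t - B t).
  by rewrite dvE /lie1 mulmxDl mulmxBr -!mulmxA opprD addrA addrK.
by rewrite -pairing_tr Ht pairing0.
Qed.
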